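(* Let $\Sigma$ be an alphabet with at least two letters, $k\ge1$, and $f\colon(\Sigma^* )^k\to\Sigma^*$ RCP. Then there exist $p_{f,1},\ldots,p_{f,k},e_f\in\mathbb{N}$ such that for all $x_1,\ldots,x_k\in\Sigma^*$ and all $a\in\Sigma$, $$|f(x_1,\ldots,x_k)|=p_{f,1}|x_1|+\cdots+p_{f,k}|x_k|+e_f,$$ $$|f(x_1,\ldots,x_k)|_a=p_{f,1}|x_1|_a+\cdots+p_{f,k}|x_k|_a+|f(\varepsilon,\ldots,\varepsilon)|_a,$$ where $e_f=|f(\varepsilon,\ldots,\varepsilon)|$ and $p_{f,i}=|f(\varepsilon,\ldots,\varepsilon,c,\varepsilon,\ldots,\varepsilon)|-|f(\varepsilon,\ldots,\varepsilon)|$ with the letter $c\in\Sigma$ in the $i$-th position (this value being independent of the choice of $c$).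
   Context: $\Sigma^*$ is the free monoid over $\Sigma$ (finite words, concatenation, empty word $\varepsilon$); $|u|$ is the length of $u$ and $|u|_a$ the number of occurrences of the letter $a$ in $u$. A function $f\colon(\Sigma^* )^k\to\Sigma^*$ is RCP if for every monoid morphism $\varphi\colon\Sigma^*\to\Sigma^*$ and all $u_1,\ldots,u_k,v_1,\ldots,v_k$ with $\varphi(u_i)=\varphi(v_i)$ for all $i$, we have $\varphi(f(u_1,\ldots,u_k))=\varphi(f(v_1,\ldots,v_k))$. *)

(* Defs.v *)
From mathcomp Require Import all_boot.
Set Implicit Arguments. Unset Strict Implicit. Unset Printing Implicit Defensive.

Definition monoid_morph (S : finType) (phi : seq S -> seq S) : Prop :=
  phi [::] = [::] /\ forall u v : seq S, phi (u ++ v) = phi u ++ phi v.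

Definition RCP (S : finType) (k : nat) (f : k.-tuple (seq S) -> seq S) : Prop :=
  forall phi : seq S -> seq S, monoid_morph phi ->
  forall u v : k.-tuple (seq S),
    (forall i : 'I_k, phi (tnth u i) = phi (tnth v i)) ->
    phi (f u) = phi (f v).

Definition eps_tuple (S : finType) (k : nat) : k.-tuple (seq S) :=
  [tuple [::] | j < k].

Definition unit_tuple (S : finType) (k : nat) (i : 'I_k) (c : S) : k.-tuple (seq S) :=
  [tuple (if j == i then [:: c] else [::]) | j < k].

(* Main.v *)
Require Import Defs.
From mathcomp Require Import all_boot zify.
Set Implicit Arguments. Unset Strict Implicit. Unset Printing Implicit Defensive.

Lemma rcp_count (S : finType) (k : nat) (f : k.-tuple (seq S) -> seq S)
  (P : pred S) (a : S) : RCP f -> forall x y : k.-tuple (seq S),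
  (forall j, count P (tnth x j) = count P (tnth y j)) -> count P (f x) = count P (f y).
Proof.
move=> Hf x y E.
pose phi := fun s : seq S => nseq (count P s) a.
have mm : monoid_morph phi.
  by split=> // u v; rewrite /phi count_cat nseqD.
have := Hf phi mm x y. rewrite /phi; move/(_ (fun j => f_equal _ (E j))).
by move/(congr1 size); rewrite /phi !size_nseq.
Qed.

Definition catt (S : finType) k (x y : k.-tuple (seq S)) : k.-tuple (seq S) :=
  [tuple tnth x j ++ tnth y j | j < k].

Lemma sum_indic (S : finType) (x : S) : \sum_(a : S) (x == a) = 1.
Proof.
rewrite (bigD1 x) //= eqxx big1 // => a /negPf; rewrite eq_sym => ->. by [].
Qed.

Lemma sum_indic' (k : nat) (p : 'I_k -> nat) (i : 'I_k) :
  \sum_(j < k) p j * (j == i) = p i.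
Proof.
rewrite (bigD1 i) //= eqxx muln1 big1 ?addn0 // => j /negPf ->; by rewrite muln0.
Qed.

Lemma size_sum_count (S : finType) (s : seq S) : size s = \sum_(a : S) count_mem a s.
Proof.
elim: s => [|x s IH] /=; first by rewrite big1.
by rewrite big_split /= sum_indic IH.
Qed.

Lemma additive (S : finType) (k : nat) (f : k.-tuple (seq S) -> seq S) (a b : S) :
  RCP f -> a != b -> forall x y : k.-tuple (seq S),
  count_mem a (f (catt x y)) + count_mem a (f (eps_tuple S k)) =
  count_mem a (f x) + count_mem a (f y).
Proof.
move=> Hf ab x y.
pose Pa := pred1 a. pose Pb := pred1 b.
pose Pab := [pred z | (z == a) || (z == b)].
have cab : forall s : seq S, count Pab s = count_mem a s + count_mem b s.
  elim=> //= z s ->; rewrite /Pab /=.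
  case: (eqVneq z a) => [->|za]; first by rewrite (negPf ab) /=; lia.
  by case: (z == b) => /=; lia.
pose yb : k.-tuple (seq S) := [tuple nseq (count_mem a (tnth y j)) b | j < k].
have key : forall x y : k.-tuple (seq S),
   count_mem a (f x) + count_mem b (f [tuple nseq (count_mem a (tnth y j)) b | j < k])
   = count_mem a (f (catt x y)) + count_mem b (f (eps_tuple S k)).
  move=> x1 y1.
  pose z : k.-tuple (seq S) := [tuple nseq (count_mem a (tnth x1 j)) a ++
                                  nseq (count_mem a (tnth y1 j)) b | j < k].
  pose w : k.-tuple (seq S) := [tuple nseq (count_mem a (tnth x1 j) +
                                  count_mem a (tnth y1 j)) a | j < k].
  have cn : forall (c d : S) n, count_mem c (nseq n d) = (d == c) * n.
    by move=> c d n; rewrite count_nseq.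
  have e1 : count_mem a (f x1) = count_mem a (f z).
    apply: (rcp_count a Hf) => j; rewrite tnth_mktuple count_cat !cn eqxx.
    by rewrite eq_sym (negPf ab) mul1n mul0n addn0.
  have e2 : count_mem b (f [tuple nseq (count_mem a (tnth y1 j)) b | j < k])
            = count_mem b (f z).
    apply: (rcp_count a Hf) => j; rewrite !tnth_mktuple count_cat !cn eqxx.
    by rewrite (negPf ab) ?mul1n ?mul0n ?add0n ?addn0.
  have e3 : count Pab (f z) = count Pab (f w).
    apply: (rcp_count a Hf) => j; rewrite !tnth_mktuple !cab !count_cat !cn eqxx.
    by rewrite (negPf ab) eq_sym (negPf ab) eqxx ?mul1n ?mul0n ?add0n ?addn0.
  have e4 : count_mem a (f w) = count_mem a (f (catt x1 y1)).
    by apply: (rcp_count a Hf) => j; rewrite /catt !tnth_mktuple count_cat !cn eqxx ?mul1n ?mul0n ?add0n ?addn0.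
  have e5 : count_mem b (f w) = count_mem b (f (eps_tuple S k)).
    by apply: (rcp_count a Hf) => j; rewrite !tnth_mktuple !cn (negPf ab) ?mul1n ?mul0n ?add0n ?addn0.
  move: e3; rewrite !cab ?mul1n ?mul0n ?add0n ?addn0; lia.
have k1 := key x y.
have k2 := key (eps_tuple S k) y.
have e6 : count_mem a (f (catt (eps_tuple S k) y)) = count_mem a (f y).
  by apply: (rcp_count a Hf) => j; rewrite /catt !tnth_mktuple.
lia.
Qed.

Lemma count_pair (S : finType) (a b : S) (s : seq S) : a != b ->
  count [pred z | (z == a) || (z == b)] s = count_mem a s + count_mem b s.
Proof.
move=> ab; elim: s => //= z s ->.
case: (eqVneq z a) => [->|za]; first by rewrite (negPf ab) /=; lia.
by case: (z == b) => /=; lia.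
Qed.

Lemma tnth_unit (S : finType) k (i j : 'I_k) (c : S) :
  tnth (unit_tuple i c) j = if j == i then [:: c] else [::].
Proof. by rewrite tnth_mktuple. Qed.

Lemma same_slope (S : finType) (k : nat) (f : k.-tuple (seq S) -> seq S) (a b : S) (i : 'I_k) :
  RCP f -> a != b ->
  count_mem a (f (unit_tuple i a)) + count_mem b (f (eps_tuple S k)) =
  count_mem b (f (unit_tuple i b)) + count_mem a (f (eps_tuple S k)).
Proof.
move=> Hf ab.
have e1 : count [pred z | (z == a) || (z == b)] (f (unit_tuple i a)) =
          count [pred z | (z == a) || (z == b)] (f (unit_tuple i b)).
  apply: (rcp_count a Hf) => j; rewrite !tnth_unit.
  by case: (j == i) => //=; rewrite !eqxx ?orbT.
have e2 : count_mem b (f (unit_tuple i a)) = count_mem b (f (eps_tuple S k)).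
  apply: (rcp_count a Hf) => j; rewrite tnth_unit tnth_mktuple.
  by case: (j == i) => //=; rewrite (negPf ab).
have e3 : count_mem a (f (unit_tuple i b)) = count_mem a (f (eps_tuple S k)).
  apply: (rcp_count a Hf) => j; rewrite tnth_unit tnth_mktuple.
  by case: (j == i) => //=; rewrite eq_sym (negPf ab).
move: e1; rewrite !count_pair //; lia.
Qed.

Lemma nonneg (S : finType) (k : nat) (f : k.-tuple (seq S) -> seq S) (a b : S) (i : 'I_k) :
  RCP f -> a != b ->
  count_mem a (f (eps_tuple S k)) <= count_mem a (f (unit_tuple i a)).
Proof.
move=> Hf ab.
pose xM (M : nat) : k.-tuple (seq S) := [tuple if j == i then nseq M a else [::] | j < k].
set E := count_mem a (f (eps_tuple S k)).
set U := count_mem a (f (unit_tuple i a)).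
have H : forall M, count_mem a (f (xM M)) + M * E = M * U + E.
  elim=> [|M IH].
    rewrite !mul0n addn0 add0n; apply: (rcp_count a Hf) => j.
    by rewrite !tnth_mktuple; case: (j == i).
  have e1 : count_mem a (f (xM M.+1)) = count_mem a (f (catt (unit_tuple i a) (xM M))).
    apply: (rcp_count a Hf) => j; rewrite !tnth_mktuple.
    by case: (j == i) => //=; rewrite eqxx.
  have := additive Hf ab (unit_tuple i a) (xM M).
  rewrite -e1 -/E -/U; lia.
have := H E.+1.
case: (leqP E U) => // hlt; nia.
Qed.

Lemma linear_count (S : finType) (k : nat) (f : k.-tuple (seq S) -> seq S) (a b : S) :
  RCP f -> a != b -> forall x : k.-tuple (seq S),
  count_mem a (f x) = \sum_(i < k) (count_mem a (f (unit_tuple i a)) -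
       count_mem a (f (eps_tuple S k))) * count_mem a (tnth x i)
     + count_mem a (f (eps_tuple S k)).
Proof.
move=> Hf ab x.
set E := count_mem a (f (eps_tuple S k)).
set q := fun i => count_mem a (f (unit_tuple i a)) - E.
have hq : forall i, count_mem a (f (unit_tuple i a)) = q i + E.
  by move=> i; have := nonneg i Hf ab; rewrite /q -/E; lia.
move: {2}(\sum_(i < k) count_mem a (tnth x i)) (erefl (\sum_(i < k) count_mem a (tnth x i))) => N.
elim: N x => [|N IH] x hN.
  have h0 : forall i, count_mem a (tnth x i) = 0.
    move=> i; move: hN; rewrite (bigD1 i) //=; lia.
  rewrite big1 ?add0n; last by move=> i _; rewrite h0 muln0.
  apply: (rcp_count a Hf) => j; by rewrite h0 tnth_mktuple.
case: (pickP (fun i => 0 < count_mem a (tnth x i))) => [i Hi | H0]; last first.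
  move: hN; rewrite big1 // => i _; apply/eqP; rewrite -leqn0 leqNgt; exact/negbT/H0.
pose x' : k.-tuple (seq S) :=
  [tuple if j == i then nseq (count_mem a (tnth x i)).-1 a else tnth x j | j < k].
have hc : forall j, count_mem a (tnth x j) = count_mem a (tnth x' j) + 1 * (j == i).
  move=> j; rewrite tnth_mktuple; case: (eqVneq j i) => [->|ji].
    by rewrite count_nseq /= eqxx; case: (count_mem a _) Hi => //= n _; rewrite mul1n addn1.
  by rewrite muln0 addn0.
have hsum : forall p : 'I_k -> nat, \sum_(j < k) p j * count_mem a (tnth x j) =
      \sum_(j < k) p j * count_mem a (tnth x' j) + p i.
  move=> p; rewrite -(sum_indic' p i) -big_split /=; apply: eq_bigr => j _.
  by rewrite hc mul1n mulnDr.
have e1 : count_mem a (f x) = count_mem a (f (catt (unit_tuple i a) x')).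
  apply: (rcp_count a Hf) => j; rewrite /catt [in RHS]tnth_mktuple count_cat tnth_unit hc.
  by case: (j == i) => /=; rewrite ?eqxx; lia.
have hN' : N = \sum_(i < k) count_mem a (tnth x' i).
  move: hN; have := hsum (fun _ => 1).
  under eq_bigr do rewrite mul1n.
  under [\sum_(j < k) 1 * _]eq_bigr do rewrite mul1n.
  by move=> ->; rewrite addn1 => -[->].
have := additive Hf ab (unit_tuple i a) x'.
rewrite -e1 -/E (IH x' (esym hN')) hq hsum; rewrite /q; lia.
Qed.

Lemma exists_other (S : finType) (a : S) : 1 < #|S| -> exists b, a != b.
Proof.
move=> hS; case: (pickP [pred b | a != b]) => [b hb | H0]; first by exists b.
exfalso; suff : #|S| = 1 by lia.
rewrite -(card1 a); apply: eq_card => z; rewrite !inE /=.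
by move: (H0 z) => /= /negbFE /eqP ->; rewrite eqxx.
Qed.

Theorem mainTheorem13 (S : finType) (k : nat) (f : k.-tuple (seq S) -> seq S) :
  1 < #|S| -> 0 < k -> RCP f ->
  exists (p : 'I_k -> nat) (e : nat),
    e = size (f (eps_tuple S k)) /\
    (forall (i : 'I_k) (c : S), size (f (unit_tuple i c)) = p i + e) /\
    (forall x : k.-tuple (seq S),
       size (f x) = \sum_(i < k) p i * size (tnth x i) + e /\
       forall a : S,
         count_mem a (f x) =
         \sum_(i < k) p i * count_mem a (tnth x i) + count_mem a (f (eps_tuple S k))).
Proof.
move=> hS hk Hf.
have /card_gt0P [a0 _] : 0 < #|S| by lia.
set E := eps_tuple S k.
pose p i := count_mem a0 (f (unit_tuple i a0)) - count_mem a0 (f E).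
have hp : forall a i, count_mem a (f (unit_tuple i a)) - count_mem a (f E) = p i.
  move=> a i; case: (eqVneq a a0) => [->//|aa0].
  have := same_slope i Hf aa0; have [b ab] := exists_other a hS.
  have [b0 ab0] := exists_other a0 hS.
  have := nonneg i Hf ab; have := nonneg i Hf ab0; rewrite /p -/E; lia.
have hcnt : forall x a, count_mem a (f x) =
   \sum_(i < k) p i * count_mem a (tnth x i) + count_mem a (f E).
  move=> x a; have [b ab] := exists_other a hS.
  rewrite (linear_count Hf ab x); congr (_ + _); apply: eq_bigr => i _.
  by rewrite hp.
have hsize : forall x, size (f x) = \sum_(i < k) p i * size (tnth x i) + size (f E).
  move=> x; rewrite size_sum_count (size_sum_count (f E)).
  under eq_bigr do rewrite hcnt.
  rewrite big_split /=; congr (_ + _); rewrite exchange_big /=.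
  apply: eq_bigr => i _; rewrite -big_distrr /= -size_sum_count //.
exists p, (size (f E)); split => //; split; last first.
  by move=> x; split => // a; exact: hcnt.
move=> i c; rewrite hsize; congr (_ + _).
rewrite -(sum_indic' p i); apply: eq_bigr => j _.
by rewrite tnth_unit; case: (j == i).
Qed.
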